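(* Consider an instance of the Steiner Team Orienteering Problem and the formulation $\mathcal{F}_2$ as described in the context, and let $\mathcal{K}$ be the set of conflicting vertex pairs. For every feasible solution $(x,y,f,\varphi)$ of $\mathcal{F}_2$, every pair $\langle i,j\rangle\in\mathcal{K}$ and every $V\subseteq N\setminus\{t\}$ with $\{i,j\}\subseteq V$, we have $\sum_{e\in\delta^+(V)}x_e\ge y_i+y_j$.
   Context: An instance of the Steiner Team Orienteering Problem (STOP) consists of: a digraph $G=(N,A)$; an origin $s\in N$ and a destination $t\in N$ with $s\neq t$; disjoint sets $S,P\subseteq N\setminus\{s,t\}$ (mandatory and profitable vertices) with $N=S\cup P\cup\{s,t\}$; rewards $p_i\in\mathbb{Z}^+$ for $i\in P$; traverse times $d_{ij}\in\mathbb{R}^+$ for $(i,j)\in A$; a number $m$ of vehicles and a time limit $T$. For $i\in N$ let $\delta^+(i)=\{j\in N:(i,j)\in A\}$ and $\delta^-(i)=\{j\in N:(j,i)\in A\}$; for $V\subseteq N$ let $\delta^+(V)=\{(i,j)\in A: i\in V, j\in N\setminus V\}$ and $\delta^-(V)=\{(i,j)\in A: i\in N\setminus V, j\in V\}$. For $i,j\in N$, $R_{ij}$ denotes the minimum of $\sum_{a\in A_p}d_a$ over all paths $p$ from $i$ to $j$ in $G$ (with arc set $A_p$), and $R_{ii}=0$. $\mathcal{K}$ is the set of pairs $\langle i,j\rangle$ with $i,j\in N\setminus\{s,t\}$ such that every route from $s$ to $t$ in $G$ visiting both $i$ and $j$ (in any order) has total traverse time (sum of $d$ over its arcs) exceeding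 $T$. $\mathcal{F}_2$: maximize $\sum_{i\in P}p_iy_i$ over $x\in\{0,1\}^A$, $y\in\{0,1\}^N$, $f\in\mathbb{R}^A$, $\varphi\in\mathbb{R}$ subject to: $y_i=1$ for all $i\in S\cup\{s,t\}$; $\sum_{j\in\delta^+(i)}x_{ij}=y_i$ for all $i\in S\cup P$; $\sum_{j\in\delta^+(s)}x_{sj}=\sum_{i\in\delta^-(t)}x_{it}=m-\varphi$; $\sum_{i\in\delta^-(s)}x_{is}=\sum_{j\in\delta^+(t)}x_{tj}=0$; $\sum_{j\in\delta^+(i)}x_{ij}-\sum_{j\in\delta^-(i)}x_{ji}=0$ for all $i\in S\cup P$; $f_{sj}=(T-d_{sj})x_{sj}$ for all $j\in\delta^+(s)$; $\sum_{j\in\delta^-(i)}f_{ji}-\sum_{j\in\delta^+(i)}f_{ij}=\sum_{j\in\delta^+(i)}d_{ij}x_{ij}$ for all $i\in S\cup P$; $f_{ij}\le(T-R_{si}-d_{ij})x_{ij}$ for all $(i,j)\in A$ with $i\neq s$; $f_{ij}\ge R_{jt}x_{ij}$ for all $(i,j)\in A$; $f\ge0$; $0\le\varphi\le m$. *)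

(* Defs.v *)
From HB Require Import structures.
From mathcomp Require Import all_boot all_order all_algebra.
From mathcomp Require Import classical_sets reals constructive_ereal ereal.
Set Implicit Arguments. Unset Strict Implicit. Unset Printing Implicit Defensive.
Import Order.TTheory GRing.Theory Num.Theory.
Local Open Scope ring_scope.

Record STOP (R : realType) := {
  N : finType;
  arcA : rel N;
  orig : N;
  dest : N;
  Sm : {set N};                   (* mandatory vertices S *)
  Pr : {set N};                   (* profitable vertices P *)
  rew : N -> nat;
  tt_ : N -> N -> R;              (* traverse times d_ij *)
  nveh : nat;
  Tlim : R;
  orig_neq_dest : orig != dest;
  SP_disjoint : [disjoint Sm & Pr];
  orig_notin : orig \notin Sm :|: Pr;
  dest_notin : dest \notin Sm :|: Pr;
  N_cover : [set: N] = Sm :|: Pr :|: [set orig; dest];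
  rew_pos : forall i, i \in Pr -> (0 < rew i)%N;
  tt_pos : forall i j, arcA i j -> 0 < tt_ i j
}.

Section Defs.
Variables (R : realType) (I : STOP R).
Local Notation N := (N I).
Local Notation A := (@arcA R I).
Local Notation d := (@tt_ R I).

Definition walk_time (u : N) (w : seq N) : R :=
  \sum_(e <- zip (u :: w) w) d e.1 e.2.

Definition is_walk (u v : N) (w : seq N) : Prop :=
  path A u w /\ last u w = v.

(* R_ij : minimum traverse time of a path from i to j (+oo if none);
   the trivial walk gives R_ii = 0. *)
Definition Rdist (i j : N) : \bar R :=
  ereal_inf [set (walk_time i w)%:E | w in [set w | is_walk i j w]].

Definition conflicting (i j : N) : Prop :=
  i \notin [set orig I; dest I] /\ j \notin [set orig I; dest I] /\
  forall w : seq N, is_walk (orig I) (dest I) w ->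
    i \in orig I :: w -> j \in orig I :: w -> Tlim I < walk_time (orig I) w.

Local Open Scope ereal_scope.

Definition F2_feasible (x : N -> N -> R) (y : N -> R) (f : N -> N -> R)
    (phi : R) : Prop :=
  let s := orig I in let t := dest I in let T := Tlim I in
  let m := (nveh I)%:R in
  let SP := Sm I :|: Pr I in
  (forall i j, A i j -> x i j = 0%R \/ x i j = 1%R) /\
      (forall i, y i = 0%R \/ y i = 1%R) /\
      (forall i, i \in Sm I :|: [set s; t] -> y i = 1%R) /\
      (forall i, i \in SP -> (\sum_(j | A i j) x i j)%R = y i) /\
      (\sum_(j | A s j) x s j)%R = (m - phi)%R /\ (\sum_(i | A i t) x i t)%R = (m - phi)%R /\
      (\sum_(i | A i s) x i s)%R = 0%R /\ (\sum_(j | A t j) x t j)%R = 0%R /\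
      (forall i, i \in SP -> (\sum_(j | A i j) x i j - \sum_(j | A j i) x j i)%R = 0%R) /\
      (forall j, A s j -> f s j = ((T - d s j) * x s j)%R) /\
      (forall i, i \in SP ->
         (\sum_(j | A j i) f j i - \sum_(j | A i j) f i j)%R
           = (\sum_(j | A i j) d i j * x i j)%R) /\
      (forall i j, A i j -> i != s ->
         (f i j)%:E <= (T%:E - Rdist s i - (d i j)%:E) * (x i j)%:E) /\
      (forall i j, A i j -> Rdist j t * (x i j)%:E <= (f i j)%:E) /\
      (forall i j, A i j -> (0 <= f i j)%R) /\
      (0 <= phi <= m)%R.

End Defs.

(* Main.v *)
Require Import Defs.
From HB Require Import structures.
From mathcomp Require Import all_boot all_order all_algebra.
From mathcomp Require Import boolp classical_sets reals constructive_ereal ereal.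
From mathcomp Require Import lra.
Import Order.TTheory GRing.Theory Num.Theory.
Set Implicit Arguments. Unset Strict Implicit. Unset Printing Implicit Defensive.
Local Open Scope ring_scope.

Lemma no_ascent (T : finType) (R : realDomainType) (g : T -> R) (P : T -> Prop) :
  (forall v, P v -> exists2 u, P u & g v < g u) -> forall v, ~ P v.
Proof.
move=> Hs.
suff H : forall n v, (#|[set u | (g v < g u)%R]| <= n)%N -> ~ P v.
  by move=> v; exact: (H _ v (leqnn _)).
elim=> [|n IH] v Hc Pv; have [u Pu ltvu] := Hs v Pv.
  have : u \in [set u0 | g v < g u0] by rewrite inE.
  by move: Hc; rewrite leqn0 cards_eq0 => /eqP ->; rewrite inE.
apply: (IH u _ Pu); rewrite -ltnS; apply: leq_trans Hc.
apply: proper_card; apply/properP; split.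
  by apply/fintype.subsetP => w; rewrite !inE => /(lt_trans ltvu).
by exists u; rewrite !inE ?ltxx.
Qed.

Lemma sum_ge1 (T : finType) (R : numDomainType) (P : pred T) (F : T -> R) a :
  (forall i, P i -> 0 <= F i) -> P a -> F a <= \sum_(i | P i) F i.
Proof.
move=> H0 Pa; rewrite (bigD1 a) //= lerDl; apply: sumr_ge0 => i /andP[Pi _].
exact: H0.
Qed.

Lemma sum_ge2 (T : finType) (R : numDomainType) (P : pred T) (F : T -> R) a b :
  (forall i, P i -> 0 <= F i) -> a != b -> P a -> P b ->
  F a + F b <= \sum_(i | P i) F i.
Proof.
move=> H0 ab Pa Pb; rewrite (bigD1 a) //= lerD2l.
rewrite (bigD1 b) /=; last by rewrite Pb eq_sym.
rewrite lerDl; apply: sumr_ge0 => i /andP[/andP[Pi _] _]; exact: H0.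
Qed.

Section Main.
Variables (R : realType) (I : STOP R).
Variables (x : N I -> N I -> R) (y : N I -> R) (f : N I -> N I -> R) (phi : R).
Hypothesis Hfeas : F2_feasible x y f phi.

Local Notation A := (@arcA R I).
Local Notation d := (@tt_ R I).
Local Notation s := (orig I).
Local Notation t := (dest I).
Local Notation SP := (Sm I :|: Pr I).

Ltac feas := move: Hfeas; rewrite /F2_feasible /=;
  move=> [H1 [H2 [H3 [H4 [H5 [H6 [H7 [H8 [H9 [H10 [H11 [H12 [H13 [H14 H15]]]]]]]]]]]]]].

Lemma inSP v : v != s -> v != t -> v \in SP.
Proof.
move=> vs vt; have : v \in [set: N I] by rewrite inE.
by rewrite (N_cover I) !inE (negbTE vs) (negbTE vt) !orbF.
Qed.

Lemma x01 u v : A u v -> x u v = 0 \/ x u v = 1.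
Proof. by feas; apply: H1. Qed.

Lemma x_ge0 u v : A u v -> 0 <= x u v.
Proof. by move/x01 => [->|->]. Qed.

Lemma y01 v : y v = 0 \/ y v = 1.
Proof. by feas; apply: H2. Qed.

Lemma outdeg v : v \in SP -> \sum_(w | A v w) x v w = y v.
Proof. by feas; apply: H4. Qed.

Lemma indeg v : v \in SP -> \sum_(w | A w v) x w v = y v.
Proof.
move=> vSP; rewrite -(outdeg vSP); apply/eqP; rewrite eq_sym -subr_eq0.
by apply/eqP; move: vSP; feas; apply: H9.
Qed.

Definition E u v := A u v && (x u v == 1).

Lemma EA u v : E u v -> A u v.
Proof. by case/andP. Qed.

Lemma Ex u v : E u v -> x u v = 1.
Proof. by case/andP => _ /eqP. Qed.

Lemma E_not_s u : ~~ E u s.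
Proof.
apply/negP => /andP[Au /eqP xu].
have := @psumr_eq0P _ _ (fun i => A i s) (fun i => x i s).
move=> /(_ (fun i Ai => x_ge0 Ai)) H.
by move: (H ltac:(feas; exact: H7) u Au); rewrite xu => /eqP; rewrite oner_eq0.
Qed.

Lemma E_not_t v : ~~ E t v.
Proof.
apply/negP => /andP[Av /eqP xv].
have := @psumr_eq0P _ _ (fun i => A t i) (fun i => x t i).
move=> /(_ (fun i Ai => x_ge0 Ai)) H.
by move: (H ltac:(feas; exact: H8) v Av); rewrite xv => /eqP; rewrite oner_eq0.
Qed.

Lemma y_le1 v : y v <= 1.
Proof. by case: (y01 v) => ->; rewrite ?ler01. Qed.

Lemma succ_uniq v u u' : v \in SP -> E v u -> E v u' -> u = u'.
Proof.
move=> vSP Eu Eu'; apply/eqP; apply/negP => /negP uu.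
have := sum_ge2 (fun i Ai => @x_ge0 v i Ai) uu (EA Eu) (EA Eu').
rewrite outdeg // (Ex Eu) (Ex Eu') => H.
  have := le_trans H (y_le1 v) => H2; lra.
Qed.

Lemma pred_uniq v c c' : v \in SP -> E c v -> E c' v -> c = c'.
Proof.
move=> vSP Eu Eu'; apply/eqP; apply/negP => /negP uu.
have := sum_ge2 (fun i Ai => @x_ge0 i v Ai) uu (EA Eu) (EA Eu').
rewrite indeg // (Ex Eu) (Ex Eu') => H.
  have := le_trans H (y_le1 v) => H2; lra.
Qed.

Lemma f0 a b : A a b -> x a b = 0 -> f a b = 0.
Proof.
case: (eqVneq a s) => [->|ns] Ab xb.
  by feas; rewrite H10 // xb mulr0.
feas; apply/eqP; rewrite eq_le H14 // andbT.
by have := H12 a b Ab ns; rewrite xb mule0 lee_fin.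
Qed.

Lemma not1_0 a b : A a b -> x a b != 1 -> x a b = 0.
Proof. by move=> Ab; case: (x01 Ab) => ->; rewrite ?eqxx. Qed.

Lemma active_out v : v \in SP -> y v = 1 -> exists u, E v u.
Proof.
move=> vSP yv; apply: contrapT => Hn.
have : \sum_(w | A v w) x v w = 0.
  apply: big1 => w Aw; apply: not1_0 => //; apply/negP => xw.
  by apply: Hn; exists w; rewrite /E Aw xw.
by rewrite outdeg // yv => /eqP; rewrite oner_eq0.
Qed.

Lemma active_in v : v \in SP -> y v = 1 -> exists u, E u v.
Proof.
move=> vSP yv; apply: contrapT => Hn.
have : \sum_(w | A w v) x w v = 0.
  apply: big1 => w Aw; apply: not1_0 => //; apply/negP => xw.
  by apply: Hn; exists w; rewrite /E Aw xw.
by rewrite indeg // yv => /eqP; rewrite oner_eq0.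
Qed.

Lemma y1_of_ge v : 1 <= y v -> y v = 1.
Proof. by case: (y01 v) => -> //; rewrite ler10. Qed.

Lemma E_in_act v u : E v u -> u \in SP -> y u = 1.
Proof.
move=> Evu uSP; apply: y1_of_ge; rewrite -indeg // -(Ex Evu).
exact: (sum_ge1 (fun i Ai => @x_ge0 i u Ai) (EA Evu)).
Qed.

Lemma E_out_act v u : E v u -> v \in SP -> y v = 1.
Proof.
move=> Evu vSP; apply: y1_of_ge; rewrite -outdeg // -(Ex Evu).
exact: (sum_ge1 (fun i Ai => @x_ge0 v i Ai) (EA Evu)).
Qed.

Definition inf v := \sum_(w | A w v) f w v.
Definition outf v := \sum_(w | A v w) f v w.

Lemma inf_eq p v : v \in SP -> E p v -> inf v = f p v.
Proof.
move=> vSP Epv; rewrite /inf (bigD1 p) ?(EA Epv) //= big1 ?addr0 //.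
move=> w /andP[Aw wp]; apply: f0 => //; apply: not1_0 => //; apply/negP => xw.
have Ew : E w v by rewrite /E Aw xw.
by move: wp; rewrite (pred_uniq vSP Ew Epv) eqxx.
Qed.

Lemma outf_eq v u : v \in SP -> E v u -> outf v = f v u.
Proof.
move=> vSP Evu; rewrite /outf (bigD1 u) ?(EA Evu) //= big1 ?addr0 //.
move=> w /andP[Aw wp]; apply: f0 => //; apply: not1_0 => //; apply/negP => xw.
have Ew : E v w by rewrite /E Aw xw.
by move: wp; rewrite (succ_uniq vSP Ew Evu) eqxx.
Qed.

Lemma dsum_eq v u : v \in SP -> E v u -> \sum_(w | A v w) d v w * x v w = d v u.
Proof.
move=> vSP Evu; rewrite (bigD1 u) ?(EA Evu) //= big1 ?addr0 ?(Ex Evu) ?mulr1 //.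
move=> w /andP[Aw wp].
have -> : x v w = 0.
  apply: not1_0 => //; apply/negP => xw.
  have Ew : E v w by rewrite /E Aw xw.
  by move: wp; rewrite (succ_uniq vSP Ew Evu) eqxx.
by rewrite mulr0.
Qed.

Lemma flow_eq v : v \in SP -> inf v - outf v = \sum_(w | A v w) d v w * x v w.
Proof. by move=> vSP; feas; apply: H11. Qed.

Lemma fstep p v u : v \in SP -> E p v -> E v u -> f p v = f v u + d v u.
Proof.
move=> vSP Epv Evu; have := flow_eq vSP.
rewrite (inf_eq vSP Epv) (outf_eq vSP Evu) (dsum_eq vSP Evu) => <-.
by rewrite addrC subrK.
Qed.

Lemma inf_lt p v : p \in SP -> v \in SP -> E p v -> inf v < inf p.
Proof.
move=> pSP vSP Epv; rewrite (inf_eq vSP Epv).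
have := flow_eq pSP; rewrite (outf_eq pSP Epv) (dsum_eq pSP Epv) => H.
have -> : inf p = f p v + d p v by rewrite -H addrC subrK.
by rewrite ltrDl; apply: (tt_pos (EA Epv)).
Qed.


Lemma fwd v : v \in SP -> y v = 1 -> exists w, path E v w /\ last v w = t.
Proof.
move=> vSP yv; apply: contrapT => Hn.
pose P v := [/\ v \in SP, y v = 1 & ~ exists w, path E v w /\ last v w = t].
apply: (@no_ascent _ _ (fun v => - inf v) P _ v); last by split.
move=> {vSP yv Hn} v [vSP yv Hn].
have [u Evu] := active_out vSP yv.
have us : u != s by apply: contraNneq (E_not_s v) => <-.
case: (eqVneq u t) => [ut|ut].
  by exfalso; apply: Hn; exists [:: t]; rewrite /= -ut Evu.
have uSP := inSP us ut.
exists u; last by rewrite ltrN2; exact: inf_lt Evu.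
split => // [|[w [pw lw]]]; first exact: E_in_act Evu uSP.
by apply: Hn; exists (u :: w); rewrite /= Evu pw.
Qed.

Lemma bwd v : v \in SP -> y v = 1 -> exists w, path E s w /\ last s w = v.
Proof.
move=> vSP yv; apply: contrapT => Hn.
pose P v := [/\ v \in SP, y v = 1 & ~ exists w, path E s w /\ last s w = v].
apply: (@no_ascent _ _ inf P _ v); last by split.
move=> {vSP yv Hn} v [vSP yv Hn].
have [p Epv] := active_in vSP yv.
have pt : p != t by apply: contraNneq (E_not_t v) => <-.
case: (eqVneq p s) => [ps|ps].
  by exfalso; apply: Hn; exists [:: v]; rewrite /= -ps Epv.
have pSP := inSP ps pt.
exists p; last exact: inf_lt Epv.
split => // [|[w [pw lw]]]; first exact: E_out_act Epv pSP.
apply: Hn; exists (rcons w v); rewrite rcons_path pw lw Epv last_rcons.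
by [].
Qed.

Lemma walk_time_cons u v w : walk_time u (v :: w) = d u v + walk_time v w.
Proof. by rewrite /walk_time /= big_cons. Qed.

Lemma time_le w p v : E p v -> path E v w -> last v w = t -> walk_time v w <= f p v.
Proof.
elim: w p v => [|u w IH] p v Epv /=.
  move=> _ _; rewrite /walk_time /= big_nil; feas; exact: H14 (EA Epv).
move=> /andP[Evu pw] lw.
have vs : v != s by apply: contraNneq (E_not_s p) => <-.
have vt : v != t by apply: contraNneq (E_not_t u) => <-.
rewrite walk_time_cons (fstep (inSP vs vt) Epv Evu) addrC lerD2r.
exact: IH Evu pw lw.
Qed.

Lemma route_le w : path E s w -> last s w = t -> walk_time s w <= Tlim I.
Proof.
case: w => [|v w] /=.
  by move=> _ st; move: (orig_neq_dest I); rewrite st eqxx.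
move=> /andP[Esv pw] lw; rewrite walk_time_cons.
have := time_le Esv pw lw; feas; rewrite H10 ?(EA Esv) // (Ex Esv) mulr1 => H.
lra.
Qed.

Lemma back_unique w2 u' w1 : path E s w1 -> path E u' w2 ->
  last u' w2 \in s :: w1 -> last u' w2 != t -> u' \in s :: w1.
Proof.
elim/last_ind: w2 u' w1 => [|w2 b IH] u' w1 //.
rewrite rcons_path last_rcons => pw1 /andP[pw2 Ecb] bin bt.
have bs : b != s by apply: contraNneq (E_not_s (last u' w2)) => <-.
case/splitPl: w1 / bin pw1 => p1 p2 lp1.
rewrite cat_path => /andP[pp1 _].
case/lastP: p1 lp1 pp1 => [/= bs'|p1 b' ]; first by rewrite bs' eqxx in bs.
rewrite last_rcons => eb; subst b'.
rewrite rcons_path => /andP[pp1 Eb].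
have bSP := inSP bs bt.
have ceq := pred_uniq bSP Ecb Eb.
have ct : last u' w2 != t by apply: contraNneq (E_not_t b) => <-.
have := IH u' p1 pp1 pw2; rewrite ceq mem_last => /(_ isT); rewrite -ceq => /(_ ct).
by rewrite !inE mem_cat mem_rcons inE => /orP[->|->]; rewrite ?orbT.
Qed.

Lemma exit_arc (V : {set N I}) w a : a \in V -> last a w \notin V -> path E a w ->
  exists b c, [/\ b \in a :: w, b \in V, c \notin V & E b c].
Proof.
elim: w a => [|v w IH] a aV /=; first by rewrite aV.
move=> lw /andP[Eav pw]; case: (boolP (v \in V)) => vV.
  have [b [c [bin bV cV Ebc]]] := IH v vV lw pw.
  by exists b, c; split => //; rewrite inE bin orbT.
by exists a, v; split => //; rewrite inE eqxx.
Qed.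


Lemma main i j : conflicting i j ->
  forall V : {set N I}, t \notin V -> i \in V -> j \in V ->
    y i + y j <= \sum_(u in V) \sum_(v in ~: V | A u v) x u v.
Proof.
move=> [iST [jST Hw]] V tV iV jV.
have notST v : v \notin [set s; t] -> v \in SP.
  by move=> h; apply: inSP; apply: contraNneq h => ->; rewrite !inE eqxx ?orbT.
have iSP := notST _ iST; have jSP := notST _ jST.
pose S u := \sum_(v in ~: V | A u v) x u v.
have -> : \sum_(u in V) \sum_(v in ~: V | A u v) x u v = \sum_(u in V) S u by [].
have S0 u : 0 <= S u by apply: sumr_ge0 => v /andP[_ Av]; exact: x_ge0.
have Sge u v : v \notin V -> E u v -> 1 <= S u.
  move=> vV Euv; rewrite -(Ex Euv); apply: (sum_ge1 (P := fun v => (v \in ~: V) && A u v)).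
    by move=> w /andP[_ Aw]; exact: x_ge0.
  by rewrite inE vV (EA Euv).
have exitv v : v \in SP -> y v = 1 -> v \in V -> exists wb wf a b,
    [/\ path E s wb, last s wb = v, path E v wf, last v wf = t &
        [/\ a \in v :: wf, a \in V, b \notin V & E a b]].
  move=> vSP yv vV.
  have [wb [pb lb]] := bwd vSP yv; have [wf [pf lf]] := fwd vSP yv.
  have lV : last v wf \notin V by rewrite lf.
  have [a [b [ain aV bV Eab]]] := exit_arc vV lV pf.
  by exists wb, wf, a, b.
have one v : v \in SP -> y v = 1 -> v \in V -> 1 <= \sum_(u in V) S u.
  move=> vSP yv vV; have [wb [wf [a [b [_ _ _ _ [_ aV bV Eab]]]]]] := exitv v vSP yv vV.
  exact: le_trans (Sge _ _ bV Eab) (sum_ge1 (fun u _ => S0 u) aV).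
case: (y01 i) => yi; case: (y01 j) => yj; rewrite yi yj.
- by rewrite addr0; apply: sumr_ge0.
- by rewrite add0r; exact: one j jSP yj jV.
- by rewrite addr0; exact: one i iSP yi iV.
have [wbi [wfi [a [b [pbi lbi pfi lfi [ain aV bV Eab]]]]]] := exitv i iSP yi iV.
have [wbj [wfj [a' [b' [pbj lbj pfj lfj [ain' aV' bV' Eab']]]]]] := exitv j jSP yj jV.
have aa : a != a'.
  apply/negP => /eqP aa'; subst a'.
  pose Ri := wbi ++ wfi.
  have pRi : path E s Ri by rewrite cat_path pbi lbi pfi.
  have lRi : last s Ri = t by rewrite last_cat lbi.
  have iR : i \in s :: Ri by rewrite /Ri -cat_cons mem_cat -lbi mem_last.
  have aR : a \in s :: Ri.
    move: ain; rewrite inE => /orP[/eqP -> //|h].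
    by rewrite inE mem_cat h !orbT.
  have at_ : a != t by apply: contraNneq tV => <-.
  case/splitPl: wfj / ain' pfj lfj => q1 q2 lq1.
  rewrite cat_path => /andP[pq1 _] _.
  have jR : j \in s :: Ri.
    apply: (back_unique pRi pq1); rewrite lq1 //.
  have Hwk : is_walk s t Ri.
    by split => //; apply: sub_path pRi => u v /andP[].
  have := Hw Ri Hwk iR jR; have := route_le pRi lRi.
  by move=> h1 h2; have := le_lt_trans h1 h2; rewrite ltxx.
apply: le_trans (sum_ge2 (fun u _ => S0 u) aa aV aV').
by apply: lerD; [exact: Sge _ _ bV Eab | exact: Sge _ _ bV' Eab'].
Qed.

End Main.

Theorem corollary2 (R : realType) (I : STOP R)
    (x : N I -> N I -> R) (y : N I -> R) (f : N I -> N I -> R) (phi : R) :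
  F2_feasible x y f phi ->
  forall i j : N I, conflicting i j ->
  forall V : {set N I}, dest I \notin V -> i \in V -> j \in V ->
    y i + y j <= \sum_(u in V) \sum_(v in ~: V | arcA u v) x u v.
Proof. by move=> H i j Hc V tV iV jV; exact: (main H Hc tV iV jV). Qed.
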